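(* For $0<\varepsilon\le 1/2$, let $G(\varepsilon;\eta)=-\dfrac{\varepsilon\Upsilon(\varepsilon^{1/2}\eta)}{1-\varepsilon\eta}$ for $\eta\ge0$ and let $W(\varepsilon;\eta)$ be defined by $G=-\partial_\eta W$, $W(\varepsilon;0)=0$. Then, with a constant $C$ independent of $\varepsilon$: (1) $W(\varepsilon;\cdot)$ is increasing and $0\le W(\varepsilon;\eta)\le1$ for all $\eta>0$; (2) $\lim_{\varepsilon\to0}W(\varepsilon;\infty)=0$; (3) $\int_0^\infty\big(e^{-W(\varepsilon;\eta)}-e^{-W(\varepsilon;\infty)}\big)^2\,d\eta\le C$; (4) $\int_0^\infty G^2(\varepsilon;\eta)\,d\eta\le C$; (5) $\int_0^\infty\int_\eta^\infty G^2(\varepsilon;y)\,dy\,d\eta\le C$.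
   Context: $\Upsilon\in C^\infty([0,\infty))$ is a cut-off function with $0\le\Upsilon\le1$, $\Upsilon(z)=1$ for $0\le z\le1/2$ and $\Upsilon(z)=0$ for $z\ge3/4$. $W(\varepsilon;\infty)=\lim_{\eta\to\infty}W(\varepsilon;\eta)$. *)

(* Defs.v *)
From Stdlib Require Import Reals.
From Coquelicot Require Import Coquelicot.
Open Scope R_scope.

(* Cut-off function hypothesis: Upsilon in C^oo([0,oo)), 0 <= Upsilon <= 1,
   Upsilon = 1 on [0,1/2], Upsilon = 0 on [3/4,oo).  Only values on [0,oo)
   are relevant; smoothness is required at every interior point x > 0 (near 0
   the function is constant 1, so this is C^oo up to the boundary). *)
Definition cutoff (Ups : R -> R) : Prop :=
  (forall (n : nat) (x : R), 0 < x -> ex_derive_n Ups n x) /\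
  (forall z, 0 <= z -> 0 <= Ups z <= 1) /\
  (forall z, 0 <= z <= 1/2 -> Ups z = 1) /\
  (forall z, 3/4 <= z -> Ups z = 0).

Definition G (Ups : R -> R) (eps eta : R) : R :=
  - (eps * Ups (sqrt eps * eta)) / (1 - eps * eta).

Definition W (Ups : R -> R) (eps eta : R) : R :=
  RInt (fun y => - G Ups eps y) 0 eta.

Definition Winf (Ups : R -> R) (eps : R) : R :=
  real (Lim (W Ups eps) p_infty).

(* Main.v *)
Require Import Defs.
From Stdlib Require Import Reals Lra.
From Coquelicot Require Import Coquelicot.
Open Scope R_scope.

Lemma loc_R (z r : R) (P : R -> Prop) : 0 < r ->
  (forall y, Rabs (y - z) < r -> P y) -> locally z P.
Proof. intros Hr HP. exists (mkposreal r Hr). intros y Hy. apply HP. exact Hy. Qed.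

Lemma tail_gen (h H : R -> R) (c a : R) :
  (forall x, c < x -> h x = H x) -> (forall x, continuous H x) ->
  (forall x, a < x -> H x = 0) ->
  is_RInt_gen h (at_point c) (Rbar_locally p_infty) (RInt H c a).
Proof.
  intros Hh HC H0 P HP.
  apply Filter_prod with (fun x => x = c) (fun y => Rmax c a < y).
  - reflexivity.
  - exists (Rmax c a); auto.
  - intros x y -> Hy. simpl. exists (RInt H c a). split; [|apply locally_singleton; exact HP].
    assert (Hex : forall u v, ex_RInt H u v) by (intros u v; apply (@ex_RInt_continuous R_CompleteNormedModule); intros; apply HC).
    assert (Hc : c < y) by (eapply Rle_lt_trans; [apply Rmax_l|exact Hy]).
    assert (Ha : a < y) by (eapply Rle_lt_trans; [apply Rmax_r|exact Hy]).
    assert (E : RInt H c y = RInt H c a).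
    { rewrite <- (RInt_Chasles H c a y) by auto.
      rewrite (RInt_ext H (fun _ => 0) a y).
      - rewrite RInt_const. unfold scal, plus; simpl; unfold mult; simpl. ring.
      - intros x Hx. apply H0. rewrite Rmin_left in Hx; lra. }
    rewrite <- E. apply is_RInt_ext with H.
    + intros x Hx. rewrite Rmin_left in Hx by lra. symmetry; apply Hh; lra.
    + apply (@RInt_correct R_CompleteNormedModule), Hex.
Qed.

Lemma RInt_le_const (H : R -> R) c d K : c <= d -> (forall x, continuous H x) ->
  (forall x, c < x < d -> H x <= K) -> RInt H c d <= K * (d - c).
Proof.
  intros Hcd HC HK.
  eapply Rle_trans. apply RInt_le with (g := fun _ => K); auto.
  apply (@ex_RInt_continuous R_CompleteNormedModule); intros; apply HC. apply ex_RInt_const.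
  rewrite RInt_const. unfold scal; simpl; unfold mult; simpl. lra.
Qed.

Definition U (Ups : R -> R) z := Ups (Rmax z 0).

Lemma U_cont Ups : cutoff Ups -> forall z, continuous (U Ups) z.
Proof.
  intros [Hd [Hb [H1 H0]]] z.
  destruct (Rlt_or_le z (1/2)) as [Hz|Hz].
  - apply continuous_ext_loc with (fun _ => 1); [|apply continuous_const].
    apply loc_R with (1/2 - z); [lra|]. intros y Hy.
    apply Rabs_def2 in Hy. unfold U. symmetry; apply H1.
    unfold Rmax; destruct (Rle_dec y 0); lra.
  - apply continuous_ext_loc with Ups.
    + apply loc_R with z; [lra|]. intros y Hy. apply Rabs_def2 in Hy. unfold U.
      rewrite Rmax_left by lra. reflexivity.
    + apply (@ex_derive_continuous R_AbsRing R_NormedModule). apply (Hd 1%nat z). lra.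
Qed.

Lemma U_bnd Ups : cutoff Ups -> forall z, 0 <= U Ups z <= 1.
Proof. intros [Hd [Hb [H1 H0]]] z. unfold U. apply Hb. apply Rmax_r. Qed.
Definition aa (eps : R) := 3 / (4 * sqrt eps).
Definition Ft (Ups : R -> R) (eps y : R) :=
  eps * U Ups (sqrt eps * y) / (1 - eps * Rmin y (aa eps)).

Lemma s_facts eps : 0 < eps <= 1/2 -> 0 < sqrt eps <= 71/100 /\ sqrt eps * sqrt eps = eps.
Proof.
  intros He. assert (Hs : 0 < sqrt eps) by (apply sqrt_lt_R0; lra).
  assert (E : sqrt eps * sqrt eps = eps) by (apply sqrt_sqrt; lra).
  split; [split; [exact Hs|] | exact E]. nra.
Qed.

Lemma ea eps : 0 < eps <= 1/2 -> eps * aa eps = 3/4 * sqrt eps.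
Proof.
  intros He. destruct (s_facts eps He) as [[Hs _] E]. unfold aa.
  rewrite <- E at 1. field. lra.
Qed.

Lemma Ft_den eps y : 0 < eps <= 1/2 -> 1 - eps * Rmin y (aa eps) >= 1 - 3/4 * sqrt eps.
Proof.
  intros He. rewrite <- ea by auto.
  assert (Rmin y (aa eps) <= aa eps) by apply Rmin_r. nra.
Qed.

Lemma Rmin_abs x a : Rmin x a = (x + a - Rabs (x - a)) * / 2.
Proof. unfold Rmin. destruct (Rle_dec x a).
  - rewrite Rabs_left1 by lra. field.
  - rewrite Rabs_right by lra. field. Qed.

Lemma Ft_cont Ups eps : cutoff Ups -> 0 < eps <= 1/2 -> forall y, continuous (Ft Ups eps) y.
Proof.
  intros HU He y. destruct (s_facts eps He) as [[Hs Hs1] E].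
  apply continuous_ext with
    (fun y => mult (mult eps (U Ups (sqrt eps * y)))
                (/ (1 - eps * ((y + aa eps - Rabs (y - aa eps)) * / 2)))).
  { intros x. unfold Ft, Rdiv, mult; simpl. rewrite Rmin_abs. reflexivity. }
  apply (@continuous_mult R_UniformSpace R_AbsRing).
  - apply (@continuous_mult R_UniformSpace R_AbsRing). apply continuous_const.
    apply continuous_comp with (f := fun y => sqrt eps * y) (g := U Ups).
    + apply (@continuous_mult R_UniformSpace R_AbsRing). apply continuous_const. apply continuous_id.
    + apply U_cont, HU.
  - apply continuous_Rinv_comp.
    + apply (@continuous_minus R_UniformSpace R_AbsRing R_NormedModule (fun _ => 1) (fun y => eps * ((y + aa eps - Rabs (y - aa eps)) * / 2))).
      apply continuous_const.
      apply (@continuous_mult R_UniformSpace R_AbsRing). apply continuous_const.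
      apply (@continuous_mult R_UniformSpace R_AbsRing); [|apply continuous_const].
      apply (@continuous_minus R_UniformSpace R_AbsRing R_NormedModule (fun y => y + aa eps) (fun y => Rabs (y - aa eps))).
      apply (@continuous_plus R_UniformSpace R_AbsRing R_NormedModule (fun y => y) (fun _ => aa eps)). apply continuous_id. apply continuous_const.
      apply continuous_Rabs_comp.
      apply (@continuous_minus R_UniformSpace R_AbsRing R_NormedModule (fun y => y) (fun _ => aa eps)). apply continuous_id. apply continuous_const.
    + assert (Rmin y (aa eps) = (y + aa eps - Rabs (y - aa eps)) * / 2).
      { apply Rmin_abs. }
      rewrite <- H. pose proof (Ft_den eps y He). lra.
Qed.

Lemma div_le a c K : 0 < c -> a <= K * c -> a / c <= K.
Proof.
  intros Hc H. unfold Rdiv. replace K with ((K * c) * / c) by (field; lra).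
  apply Rmult_le_compat_r; [left; apply Rinv_0_lt_compat; lra| exact H].
Qed.

Lemma Ft_nonneg Ups eps y : cutoff Ups -> 0 < eps <= 1/2 -> 0 <= Ft Ups eps y.
Proof.
  intros HU He. destruct (s_facts eps He) as [[Hs Hs1] E].
  pose proof (Ft_den eps y He). pose proof (U_bnd Ups HU (sqrt eps * y)).
  unfold Ft, Rdiv. apply Rmult_le_pos. apply Rmult_le_pos; lra.
  left; apply Rinv_0_lt_compat; lra.
Qed.

Lemma Ft_le Ups eps y : cutoff Ups -> 0 < eps <= 1/2 -> Ft Ups eps y <= 11/5 * eps.
Proof.
  intros HU He. destruct (s_facts eps He) as [[Hs Hs1] E].
  pose proof (Ft_den eps y He). pose proof (U_bnd Ups HU (sqrt eps * y)).
  unfold Ft. apply div_le. lra. nra.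
Qed.

Lemma Ft_le_half Ups eps y : cutoff Ups -> 0 < eps <= 1/2 -> y <= aa eps / 2 ->
  Ft Ups eps y <= 7/5 * eps.
Proof.
  intros HU He Hy. destruct (s_facts eps He) as [[Hs Hs1] E].
  pose proof (ea eps He). pose proof (U_bnd Ups HU (sqrt eps * y)).
  assert (Rmin y (aa eps) <= aa eps / 2).
  { unfold Rmin; destruct (Rle_dec y (aa eps)); lra. }
  assert (D : 1 - eps * Rmin y (aa eps) >= 1 - 3/8 * sqrt eps) by nra.
  unfold Ft. apply div_le. lra. nra.
Qed.

Lemma s_aa eps : 0 < eps <= 1/2 -> sqrt eps * aa eps = 3/4.
Proof. intros He. destruct (s_facts eps He) as [[Hs Hs1] E]. unfold aa. field. lra. Qed.

Lemma aa_pos eps : 0 < eps <= 1/2 -> 0 < aa eps.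
Proof. intros He. destruct (s_facts eps He) as [[Hs Hs1] E]. unfold aa.
  apply Rdiv_lt_0_compat; lra. Qed.

Lemma Ft_zero Ups eps y : cutoff Ups -> 0 < eps <= 1/2 -> aa eps <= y -> Ft Ups eps y = 0.
Proof.
  intros HU He Hy. destruct (s_facts eps He) as [[Hs Hs1] E].
  pose proof (s_aa eps He).
  assert (3/4 <= sqrt eps * y) by nra.
  unfold Ft, U. rewrite Rmax_left by lra. destruct HU as [_ [_ [_ Hz]]].
  rewrite Hz by lra. unfold Rdiv; ring.
Qed.

Lemma Ft_G Ups eps y : cutoff Ups -> 0 < eps <= 1/2 -> 0 < y -> Ft Ups eps y = - G Ups eps y.
Proof.
  intros HU He Hy. destruct (s_facts eps He) as [[Hs Hs1] E].
  destruct (Rle_or_lt (aa eps) y) as [Hy'|Hy'].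
  - rewrite Ft_zero by auto. pose proof (s_aa eps He).
    assert (3/4 <= sqrt eps * y) by nra.
    unfold G. destruct HU as [_ [_ [_ Hz]]]. rewrite Hz by lra. unfold Rdiv; ring.
  - unfold Ft, G, U. rewrite Rmin_left by lra. rewrite Rmax_left.
    unfold Rdiv; ring. nra.
Qed.

Definition Wt Ups eps x := RInt (Ft Ups eps) 0 x.

Lemma Fex Ups eps u v : cutoff Ups -> 0 < eps <= 1/2 -> ex_RInt (Ft Ups eps) u v.
Proof. intros HU He. apply (@ex_RInt_continuous R_CompleteNormedModule).
  intros; apply Ft_cont; auto. Qed.

Lemma W_Wt Ups eps x : cutoff Ups -> 0 < eps <= 1/2 -> 0 <= x -> W Ups eps x = Wt Ups eps x.
Proof.
  intros HU He Hx. unfold W, Wt. apply RInt_ext. intros z Hz.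
  rewrite Rmin_left in Hz by lra. symmetry; apply Ft_G; auto; lra.
Qed.

Lemma Wt_split Ups eps x y : cutoff Ups -> 0 < eps <= 1/2 ->
  Wt Ups eps y = Wt Ups eps x + RInt (Ft Ups eps) x y.
Proof.
  intros HU He. unfold Wt. rewrite <- (RInt_Chasles (Ft Ups eps) 0 x y) by (apply Fex; auto).
  reflexivity.
Qed.

Lemma Wt_mono Ups eps x y : cutoff Ups -> 0 < eps <= 1/2 -> x <= y -> Wt Ups eps x <= Wt Ups eps y.
Proof.
  intros HU He Hxy. rewrite (Wt_split Ups eps x y) by auto.
  assert (0 <= RInt (Ft Ups eps) x y).
  { apply RInt_ge_0; auto. apply Fex; auto. intros; apply Ft_nonneg; auto. }
  lra.
Qed.

Lemma Wt_0 Ups eps : Wt Ups eps 0 = 0.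
Proof. unfold Wt. rewrite RInt_point. reflexivity. Qed.

Lemma Wt_const Ups eps x : cutoff Ups -> 0 < eps <= 1/2 -> aa eps <= x ->
  Wt Ups eps x = Wt Ups eps (aa eps).
Proof.
  intros HU He Hx. rewrite (Wt_split Ups eps (aa eps) x) by auto.
  rewrite (RInt_ext (Ft Ups eps) (fun _ => 0) (aa eps) x).
  - rewrite RInt_const. unfold scal; simpl; unfold mult; simpl. ring.
  - intros z Hz. rewrite Rmin_left in Hz by lra. apply Ft_zero; auto; lra.
Qed.

Lemma Wt_le_aa Ups eps x : cutoff Ups -> 0 < eps <= 1/2 -> Wt Ups eps x <= Wt Ups eps (aa eps).
Proof.
  intros HU He. destruct (Rle_or_lt x (aa eps)).
  - apply Wt_mono; auto.
  - rewrite Wt_const by (auto; lra). lra.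
Qed.

Lemma Wa_bound Ups eps : cutoff Ups -> 0 < eps <= 1/2 ->
  0 <= Wt Ups eps (aa eps) <= 27/20 * sqrt eps.
Proof.
  intros HU He. pose proof (aa_pos eps He). pose proof (ea eps He).
  split.
  - rewrite <- (Wt_0 Ups eps). apply Wt_mono; auto; lra.
  - rewrite (Wt_split Ups eps (aa eps / 2) (aa eps)) by auto.
    assert (A1 : Wt Ups eps (aa eps / 2) <= 7/5 * eps * (aa eps / 2 - 0)).
    { unfold Wt. apply RInt_le_const. lra. apply Ft_cont; auto.
      intros; apply Ft_le_half; auto; lra. }
    assert (A2 : RInt (Ft Ups eps) (aa eps / 2) (aa eps) <= 11/5 * eps * (aa eps - aa eps / 2)).
    { apply RInt_le_const. lra. apply Ft_cont; auto.
      intros; apply Ft_le; auto. }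
    nra.
Qed.

Lemma Wt_cont Ups eps x : cutoff Ups -> 0 < eps <= 1/2 -> continuous (Wt Ups eps) x.
Proof.
  intros HU He. apply (@ex_derive_continuous R_AbsRing R_NormedModule).
  exists (Ft Ups eps x). apply (@is_derive_RInt R_NormedModule (Ft Ups eps) (Wt Ups eps) 0).
  - apply filter_forall. intros b. apply (@RInt_correct R_CompleteNormedModule), Fex; auto.
  - apply Ft_cont; auto.
Qed.

Lemma W_lim Ups eps : cutoff Ups -> 0 < eps <= 1/2 ->
  is_lim (W Ups eps) p_infty (Wt Ups eps (aa eps)).
Proof.
  intros HU He. pose proof (aa_pos eps He).
  apply (filterlim_ext_loc (fun _ => Wt Ups eps (aa eps))).
  - exists (aa eps). intros x Hx. rewrite W_Wt by (auto; lra).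
    rewrite (Wt_const Ups eps x) by (auto; lra). reflexivity.
  - apply is_lim_const.
Qed.

Lemma Winf_eq Ups eps : cutoff Ups -> 0 < eps <= 1/2 -> Winf Ups eps = Wt Ups eps (aa eps).
Proof.
  intros HU He. unfold Winf. rewrite (is_lim_unique _ _ _ (W_lim Ups eps HU He)). reflexivity.
Qed.

Lemma exp_mono x y : x <= y -> exp x <= exp y.
Proof. intros H. destruct (Rle_lt_or_eq_dec x y H). left; apply exp_increasing; auto. subst; lra. Qed.

Lemma exp_diff x y : 0 <= x <= y -> 0 <= exp (- x) - exp (- y) <= y - x.
Proof.
  intros H.
  assert (E : exp (- y) = exp (- x) * exp (- (y - x))) by (rewrite <- exp_plus; f_equal; ring).
  pose proof (exp_ineq1_le (- (y - x))).
  assert (exp (- (y - x)) <= 1) by (rewrite <- exp_0; apply exp_mono; lra).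
  assert (exp (- x) <= 1) by (rewrite <- exp_0; apply exp_mono; lra).
  pose proof (exp_pos (- x)).
  rewrite E. split; nra.
Qed.

Lemma cont_sq (f : R -> R) x : continuous f x -> continuous (fun y => f y ^ 2) x.
Proof.
  intros Hf. apply continuous_ext with (fun y => mult (f y) (f y)).
  intros y. unfold mult; simpl. ring.
  apply (@continuous_mult R_UniformSpace R_AbsRing); auto.
Qed.

Lemma part3 Ups eps : cutoff Ups -> 0 < eps <= 1/2 ->
  exists l, is_RInt_gen (fun eta => (exp (- W Ups eps eta) - exp (- Winf Ups eps)) ^ 2)
              (at_point 0) (Rbar_locally p_infty) l /\ l <= 2.
Proof.
  intros HU He. destruct (s_facts eps He) as [[Hs Hs1] E].
  pose proof (aa_pos eps He) as Ha. pose proof (s_aa eps He) as Hsa. pose proof (Wa_bound Ups eps HU He) as Hw.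
  set (HH := fun eta => (exp (- Wt Ups eps eta) - exp (- Wt Ups eps (aa eps))) ^ 2).
  assert (HC : forall x, continuous HH x).
  { intros x. apply cont_sq.
    apply (@continuous_minus R_UniformSpace R_AbsRing R_NormedModule
             (fun y => exp (- Wt Ups eps y)) (fun _ => exp (- Wt Ups eps (aa eps)))).
    - apply continuous_comp with (f := fun y => - Wt Ups eps y) (g := exp).
      + apply (@continuous_opp R_UniformSpace R_AbsRing R_NormedModule (Wt Ups eps)).
        apply Wt_cont; auto.
      + apply (@ex_derive_continuous R_AbsRing R_NormedModule). eexists; apply is_derive_exp.
    - apply continuous_const. }
  exists (RInt HH 0 (aa eps)). split.
  - apply tail_gen; auto.
    + intros x Hx. unfold HH. rewrite W_Wt by (auto; lra). rewrite Winf_eq by auto. reflexivity.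
    + intros x Hx. unfold HH. rewrite (Wt_const Ups eps x) by (auto; lra). simpl; ring.
  - eapply Rle_trans. apply RInt_le_const with (K := (Wt Ups eps (aa eps)) ^ 2); auto. lra.
    + intros x Hx. unfold HH.
      assert (0 <= Wt Ups eps x) by (rewrite <- (Wt_0 Ups eps); apply Wt_mono; auto; lra).
      assert (Wt Ups eps x <= Wt Ups eps (aa eps)) by (apply Wt_mono; auto; lra).
      pose proof (exp_diff (Wt Ups eps x) (Wt Ups eps (aa eps))). simpl. nra.
    + set (w := Wt Ups eps (aa eps)) in *.
      assert (Hb : w ^ 2 * (aa eps - 0) <= (27/20)^2 * (sqrt eps * (sqrt eps * aa eps))).
      { assert (w ^ 2 <= (27/20)^2 * (sqrt eps * sqrt eps)) by (simpl; nra). nra. }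
      rewrite Hsa in Hb. nra.
Qed.

Lemma Ft2_cont Ups eps x : cutoff Ups -> 0 < eps <= 1/2 -> continuous (fun y => Ft Ups eps y ^ 2) x.
Proof. intros; apply cont_sq, Ft_cont; auto. Qed.

Lemma Ft2_le Ups eps y : cutoff Ups -> 0 < eps <= 1/2 -> Ft Ups eps y ^ 2 <= (11/5 * eps) ^ 2.
Proof. intros HU He. pose proof (Ft_nonneg Ups eps y HU He). pose proof (Ft_le Ups eps y HU He).
  simpl. nra. Qed.

Lemma G2_Ft2 Ups eps y : cutoff Ups -> 0 < eps <= 1/2 -> 0 < y -> G Ups eps y ^ 2 = Ft Ups eps y ^ 2.
Proof. intros HU He Hy. rewrite Ft_G by auto. ring. Qed.

Lemma tailG Ups eps c : cutoff Ups -> 0 < eps <= 1/2 -> 0 <= c ->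
  is_RInt_gen (fun y => G Ups eps y ^ 2) (at_point c) (Rbar_locally p_infty)
    (RInt (fun y => Ft Ups eps y ^ 2) c (aa eps)).
Proof.
  intros HU He Hc. apply tail_gen.
  - intros x Hx. apply G2_Ft2; auto; lra.
  - intros; apply Ft2_cont; auto.
  - intros x Hx. rewrite Ft_zero by (auto; lra). simpl; ring.
Qed.

Lemma part4 Ups eps : cutoff Ups -> 0 < eps <= 1/2 ->
  exists l, is_RInt_gen (fun eta => (G Ups eps eta) ^ 2)
                   (at_point 0) (Rbar_locally p_infty) l /\ l <= 2.
Proof.
  intros HU He. destruct (s_facts eps He) as [[Hs Hs1] E].
  pose proof (aa_pos eps He) as Ha. pose proof (ea eps He) as Hea.
  eexists. split. apply tailG; auto; lra.
  eapply Rle_trans. apply RInt_le_const with (K := (11/5 * eps) ^ 2). lra.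
  intros; apply Ft2_cont; auto. intros; apply Ft2_le; auto.
  replace ((11/5 * eps) ^ 2 * (aa eps - 0)) with ((11/5)^2 * eps * (eps * aa eps)) by (simpl; ring).
  rewrite Hea.
  assert (H2 : eps * sqrt eps <= 1/2 * (71/100)) by (apply Rmult_le_compat; lra).
  replace ((11/5)^2 * eps * (3/4 * sqrt eps)) with
    (363/100 * (eps * sqrt eps)) by (simpl; field). lra.
Qed.

Definition Tl Ups eps eta := RInt (fun y => Ft Ups eps y ^ 2) eta (aa eps).

Lemma T_cont Ups eps x : cutoff Ups -> 0 < eps <= 1/2 -> continuous (Tl Ups eps) x.
Proof.
  intros HU He. apply (@ex_derive_continuous R_AbsRing R_NormedModule).
  eexists. apply (@is_derive_RInt' R_NormedModule (fun y => Ft Ups eps y ^ 2) (Tl Ups eps) x (aa eps)).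
  - apply filter_forall. intros b. apply (@RInt_correct R_CompleteNormedModule).
    apply (@ex_RInt_continuous R_CompleteNormedModule). intros; apply Ft2_cont; auto.
  - apply Ft2_cont; auto.
Qed.

Lemma part5 Ups eps : cutoff Ups -> 0 < eps <= 1/2 ->
      (forall eta, 0 <= eta ->
         ex_RInt_gen (fun y => (G Ups eps y) ^ 2) (at_point eta) (Rbar_locally p_infty)) /\
      (exists l, is_RInt_gen
                   (fun eta => RInt_gen (fun y => (G Ups eps y) ^ 2)
                                 (at_point eta) (Rbar_locally p_infty))
                   (at_point 0) (Rbar_locally p_infty) l /\ l <= 2).
Proof.
  intros HU He. destruct (s_facts eps He) as [[Hs Hs1] E].
  pose proof (aa_pos eps He) as Ha. pose proof (ea eps He) as Hea.
  split.
  - intros eta Heta. eexists. apply tailG; auto.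
  - exists (RInt (Tl Ups eps) 0 (aa eps)). split.
    + apply tail_gen.
      * intros x Hx. apply is_RInt_gen_unique. apply tailG; auto; lra.
      * intros; apply T_cont; auto.
      * intros x Hx. unfold Tl. rewrite (RInt_ext _ (fun _ => 0)).
        rewrite RInt_const. unfold scal; simpl; unfold mult; simpl. ring.
        intros z Hz. rewrite Rmin_right in Hz by lra. rewrite Ft_zero by (auto; lra). simpl; ring.
    + eapply Rle_trans. apply RInt_le_const with (K := (11/5 * eps) ^ 2 * aa eps). lra.
      intros; apply T_cont; auto.
      intros x Hx. unfold Tl. eapply Rle_trans. apply RInt_le_const. lra.
      intros; apply Ft2_cont; auto. intros; apply Ft2_le; auto.
      assert (0 <= (11/5 * eps) ^ 2) by (apply pow2_ge_0). nra.
      replace ((11/5 * eps) ^ 2 * aa eps * (aa eps - 0)) with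
        (121/25 * (eps * aa eps) * (eps * aa eps)) by field.
      rewrite Hea.
      replace (121/25 * (3/4 * sqrt eps) * (3/4 * sqrt eps)) with
        (121/25 * 9/16 * (sqrt eps * sqrt eps)) by field.
      rewrite E. lra.
Qed.

Lemma part2 Ups : cutoff Ups -> filterlim (Winf Ups) (at_right 0) (locally 0).
Proof.
  intros HU P [d Hd]. simpl.
  set (r := Rmin (1/2) ((d / 2) ^ 2)).
  assert (Hr : 0 < r).
  { unfold r, Rmin. destruct (Rle_dec _ _). lra. pose proof (cond_pos d). 
    apply pow_lt. lra. }
  exists (mkposreal r Hr). intros y Hy Hy0. apply Hd.
  change (Rabs (y - 0) < r) in Hy. rewrite Rminus_0_r, Rabs_right in Hy by lra.
  assert (He : 0 < y <= 1/2).
  { split. lra. assert (r <= 1/2) by apply Rmin_l. lra. }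
  rewrite Winf_eq by auto. pose proof (Wa_bound Ups y HU He) as Hw.
  assert (y < (d/2)^2) by (assert (r <= (d/2)^2) by apply Rmin_r; lra).
  assert (sqrt y < d / 2).
  { rewrite <- (sqrt_pow2 (d/2)) by (pose proof (cond_pos d); lra).
    apply sqrt_lt_1_alt. lra. }
  change (Rabs (Wt Ups y (aa y) - 0) < d). rewrite Rminus_0_r, Rabs_right by lra.
  pose proof (cond_pos d). lra.
Qed.

Theorem lemma4p1 (Ups : R -> R) (HUps : cutoff Ups) :
  (* (2) *)
  filterlim (Winf Ups) (at_right 0) (locally 0) /\
  exists C : R,
    forall eps : R, 0 < eps <= 1/2 ->
      (* (1) *)
      (forall x y, 0 <= x <= y -> W Ups eps x <= W Ups eps y) /\
      (forall eta, 0 < eta -> 0 <= W Ups eps eta <= 1) /\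
      is_lim (W Ups eps) p_infty (Winf Ups eps) /\
      (* (3) *)
      (exists l, is_RInt_gen
                   (fun eta => (exp (- W Ups eps eta) - exp (- Winf Ups eps)) ^ 2)
                   (at_point 0) (Rbar_locally p_infty) l /\ l <= C) /\
      (* (4) *)
      (exists l, is_RInt_gen (fun eta => (G Ups eps eta) ^ 2)
                   (at_point 0) (Rbar_locally p_infty) l /\ l <= C) /\
      (* (5) *)
      (forall eta, 0 <= eta ->
         ex_RInt_gen (fun y => (G Ups eps y) ^ 2) (at_point eta) (Rbar_locally p_infty)) /\
      (exists l, is_RInt_gen
                   (fun eta => RInt_gen (fun y => (G Ups eps y) ^ 2)
                                 (at_point eta) (Rbar_locally p_infty))
                   (at_point 0) (Rbar_locally p_infty) l /\ l <= C).
Proof.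
  split. apply part2; auto.
  exists 2. intros eps He. destruct (s_facts eps He) as [[Hs Hs1] E].
  split; [|split; [|split; [|split; [|split]]]].
  - intros x y Hxy. rewrite !W_Wt by (auto; lra). apply Wt_mono; auto; lra.
  - intros eta Heta. rewrite W_Wt by (auto; lra).
    pose proof (Wa_bound Ups eps HUps He). pose proof (Wt_le_aa Ups eps eta HUps He).
    assert (0 <= Wt Ups eps eta) by (rewrite <- (Wt_0 Ups eps); apply Wt_mono; auto; lra).
    lra.
  - rewrite Winf_eq by auto. apply W_lim; auto.
  - apply part3; auto.
  - apply part4; auto.
  - apply part5; auto.
Qed.
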